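(* Under the standing assumptions of the setup, for every $(v,w)$ with $\nu(v,w)>0$, \[ \gamma_\ell(v,w)\le \mathbb{E}(Y^1-Y^0\mid V=v,W=w,E=1)\le \gamma_u(v,w), \] where \[ \gamma_\ell(v,w)=\max\left\{\frac{\mu_1(v)-\mu_0(v)-(b-a)(1-\nu(v,w))}{\nu(v,w)},\,a-b\right\},\qquad \gamma_u(v,w)=\min\left\{\frac{\mu_1(v)-\mu_0(v)-(a-b)(1-\nu(v,w))}{\nu(v,w)},\,b-a\right\}. \]
   Context: Setup: there are random variables $V$ (covariates, discrete or continuous), $W$ (covariates taking finitely many values), a population indicator $E\in\{0,1\}$ ($E=1$: study population, $E=0$: target population), a treatment $A\in\{0,1\}$, potential outcomes $Y^1,Y^0\in[a,b]$ almost surely for known constants $a<b$, and observed outcome $Y=Y^A$ (consistency). In the study population ($E=1$) treatment is unconfounded given $V$: $A\perp\!\!\!\perp (Y^0,Y^1)\mid V,E=1$. Positivity: $\mathbb{P}(A=a'\mid V=v,W=w)>0$ for $a'\in\{0,1\}$ and all $(v,w)$. Transport assumptions: (1) $\mathbb{P}(W=w\mid V=v,E=1)=\mathbb{P}(W=w\mid V=v,E=0)$ for all $v,w$; (2) $\mathbb{E}(Y^1-Y^0\mid V,W,E=1)=\mathbb{E}(Y^1-Y^0\mid V,W,E=0)$. Notation: $\mu_{a'}(v)=\mathbb{E}(Y\mid V=v,A=a',E=1)$ for $a'\in\{0,1\}$, and $\nu(v,w)=\mathbb{P}(W=w\mid V=v,E=0)$. *)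

(* Defs.v *)
From HB Require Import structures.
From mathcomp Require Import all_boot all_order all_algebra.
From mathcomp Require Import all_classical all_reals all_analysis.
Set Implicit Arguments. Unset Strict Implicit. Unset Printing Implicit Defensive.
Import Order.TTheory GRing.Theory Num.Theory.
Local Open Scope classical_set_scope.
Local Open Scope ring_scope.

(* Elementary conditional probability P(B | C) = P(B /\ C) / P(C)
   (real-valued; the value is 0 when P(C) = 0, callers guard with P(C) > 0). *)
Definition cprob d (T : measurableType d) (R : realType) (P : probability T R)
  (B C : set T) : R := fine (P (B `&` C)) / fine (P C).

Definition cexp d (T : measurableType d) (R : realType) (P : probability T R)
  (X : T -> R) (C : set T) : R := Rintegral P C X / fine (P C).

(* Observed outcome under consistency: Y = Y^A. *)
Definition Yobs (T : Type) (R : realType) (A : T -> bool) (Y0 Y1 : T -> R) : T -> R :=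
  fun t => if A t then Y1 t else Y0 t.

Definition evb (T : Type) (X : T -> bool) (x : bool) : set T := [set t | X t = x].
Definition evw (T : Type) (TW : Type) (W : T -> TW) (w : TW) : set T := [set t | W t = w].

(* mu_{a'}(v) = E(Y | V = v, A = a', E = 1), computed in the conditional law Pv given V = v *)
Definition mu_ d (T : measurableType d) (R : realType) (Pv : probability T R)
  (E A : T -> bool) (Y0 Y1 : T -> R) (a' : bool) : R :=
  cexp Pv (Yobs A Y0 Y1) (evb A a' `&` evb E true).

Definition nu_ d (T : measurableType d) (R : realType) (TW : Type) (Pv : probability T R)
  (E : T -> bool) (W : T -> TW) (w : TW) : R :=
  cprob Pv (evw W w) (evb E false).

(* Main.v *)
Require Import Defs.
From HB Require Import structures.
From mathcomp Require Import all_boot all_order all_algebra.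
From mathcomp Require Import all_classical all_reals all_analysis.
From mathcomp Require Import measurable_realfun lebesgue_integral.
From mathcomp Require Import ring lra.
Set Implicit Arguments. Unset Strict Implicit. Unset Printing Implicit Defensive.
Import Order.TTheory GRing.Theory Num.Theory.
Import numFieldNormedType.Exports.
Local Open Scope classical_set_scope.
Local Open Scope ring_scope.

Section helpers.
Context d (T : measurableType d) (R : realType) (Q : probability T R).

Lemma bint (S : set T) (f : T -> R) (M : R) : measurable S ->
  measurable_fun setT f -> (forall t, `|f t| <= M) ->
  Q.-integrable S (EFin \o f).
Proof.
move=> mS mf fM.
apply: (@le_integrable _ _ _ Q S mS _ (EFin \o cst M)).
- exact/measurable_EFinP/measurable_funTS.
- by move=> x _ /=; rewrite lee_fin (le_trans (fM x))// ler_norm.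
- exact: finite_measure_integrable_cst.
Qed.

Definition phiS (S : set T) (Z : T -> R) (a : R) (t : T) : R :=
  (Z t - a + 1) * \1_S t + (a - 1).

Lemma mphiS S Z a : measurable S -> measurable_fun setT Z ->
  measurable_fun setT (phiS S Z a).
Proof.
move=> mS mZ; apply: measurable_funD => //.
apply: measurable_funM; last exact: measurable_indic.
by apply: measurable_funD => //; apply: measurable_funB.
Qed.

Lemma phiS_pre S Z (a b : R) (B : set R) : (forall t, a <= Z t <= b) ->
  B `<=` `[a, b] -> phiS S Z a @^-1` B = S `&` Z @^-1` B.
Proof.
move=> Zab Bab.
have E t : (Z t - a + 1) * 1 + (a - 1) = Z t by ring.
apply/seteqP; split => t /=; rewrite /phiS indicE.
  case: (boolP (t \in S)) => tS /=.
    by rewrite E => ?; split => //; exact/set_mem.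
  rewrite mulr0 add0r => /Bab/=; rewrite in_itv/= => /andP[+ _].
  by move=> h; exfalso; lra.
by case => /mem_set -> ?; rewrite E.
Qed.

Lemma phiS_in S Z a t : S t -> phiS S Z a t = Z t.
Proof. by move=> St; rewrite /phiS indicE mem_set// mulr1; ring. Qed.

Lemma JS S Z (a b : R) : measurable S -> measurable_fun setT Z ->
  (forall t, a <= Z t <= b) ->
  (\int[Q]_(x in S) ((Z x - a)%:E) =
   \int[pushforward Q (phiS S Z a)]_(y in `[a, b]) ((y - a)%:E))%E.
Proof.
move=> mS mZ Zab.
rewrite ge0_integral_pushforward//; last 3 first.
- exact: mphiS.
- by apply/measurable_EFinP; apply: measurable_funB.
- by move=> y; rewrite inE/= in_itv/= => /andP[ay _]; rewrite lee_fin subr_ge0.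
rewrite (@phiS_pre _ _ _ b)// (_ : Z @^-1` _ = setT); last first.
  by apply/seteqP; split => t //= _; rewrite in_itv/= Zab.
rewrite setIT; apply: eq_integral => t /[!inE] St /=.
by rewrite phiS_in.
Qed.

Lemma indep_int G F Z (a b : R) (c : {nonneg R}) :
  measurable G -> measurable F -> measurable_fun setT Z ->
  (forall t, a <= Z t <= b) ->
  (forall B, measurable B ->
     Q (G `&` Z @^-1` B) = (c%:num%:E * Q (F `&` Z @^-1` B))%E) ->
  \int[Q]_(x in G) Z x = c%:num * \int[Q]_(x in F) Z x.
Proof.
move=> mG mF mZ Zab hB.
have Zb t : `|Z t| <= `|a| + `|b|.
  have /andP[h1 h2] := Zab t.
  have h3 := ler_norm b; have h4 := ler_norm (- a); rewrite normrN in h4.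
  have h5 := normr_ge0 a; have h6 := normr_ge0 b.
  rewrite ler_norml; apply/andP; split; lra.
have JG : (\int[Q]_(x in G) ((Z x - a)%:E) =
           c%:num%:E * \int[Q]_(x in F) ((Z x - a)%:E))%E.
  rewrite (@JS G Z a b)// (@JS F Z a b)//.
  have mpF := mphiS a mF mZ; have mpG := mphiS a mG mZ.
  rewrite (eq_measure_integral (mscale c (pushforward Q (phiS F Z a))));
    idtac.
  - rewrite ge0_integral_mscale//.
    - by apply/measurable_EFinP; apply: measurable_funB.
    - by move=> y /=; rewrite in_itv/= => /andP[ay _]; rewrite lee_fin subr_ge0.
  - move=> A mA Aab; rewrite /= /pushforward /mscale /=.
    have e1 := @phiS_pre G Z a b A Zab Aab.
    have e2 := @phiS_pre F Z a b A Zab Aab.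
    rewrite e1 /pushforward e2; exact: hB.
have QG : fine (Q G) = c%:num * fine (Q F).
  have := hB setT measurableT; rewrite preimage_setT !setIT => ->.
  by rewrite fineM// fin_num_measure.
have split S : measurable S -> \int[Q]_(x in S) Z x =
    fine (\int[Q]_(x in S) ((Z x - a)%:E))%E + a * fine (Q S).
  move=> mS; rewrite -Rintegral_cst//.
  rewrite -[X in _ = X + _]/(\int[Q]_(x in S) (Z x - a)).
  rewrite RintegralB//; first by rewrite subrK.
    exact: (bint _ _ Zb).
  exact: finite_measure_integrable_cst.
rewrite split// split// JG fineM//; last first.
  rewrite fin_num_abs; apply: (le_lt_trans (le_abse_integral _ _ _))=> //.
    by apply/measurable_EFinP; apply: measurable_funB; exact: measurable_funTS.
  move: (bint (S:=F) (f := fun t => Z t - a) (M := `|a| + `|b| + `|a|) mF).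
  case/(_ _ _)/integrableP => //.
    by apply: measurable_funB.
  by move=> t; rewrite (le_trans (ler_normB _ _))// lerD2r.
rewrite QG /=; ring.
Qed.

Lemma ae_Rint S f g : measurable S -> measurable_fun setT f ->
  measurable_fun setT g -> {ae Q, forall t, f t = g t} ->
  \int[Q]_(x in S) f x = \int[Q]_(x in S) g x.
Proof.
move=> mS mf mg h; congr fine; apply: ae_eq_integral => //.
- exact/measurable_EFinP/measurable_funTS.
- exact/measurable_EFinP/measurable_funTS.
by apply: filterS h => t /= -> _.
Qed.

Lemma Rint_bnd S f (lo hi : R) : measurable S -> measurable_fun setT f ->
  (forall t, lo <= f t <= hi) ->
  lo * fine (Q S) <= \int[Q]_(x in S) f x <= hi * fine (Q S).
Proof.
move=> mS mf fb.
have Zb t : `|f t| <= `|lo| + `|hi|.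
  have /andP[h1 h2] := fb t.
  have h3 := ler_norm hi; have h4 := ler_norm (- lo); rewrite normrN in h4.
  have h5 := normr_ge0 lo; have h6 := normr_ge0 hi.
  rewrite ler_norml; apply/andP; split; lra.
have fi := bint mS mf Zb.
rewrite -!Rintegral_cst//; apply/andP; split; apply: le_Rintegral => //;
  try exact: finite_measure_integrable_cst.
- by move=> t _; have /andP[] := fb t.
- by move=> t _; have /andP[] := fb t.
Qed.

Lemma fQ_le (S1 S2 : set T) : measurable S1 -> measurable S2 ->
  S1 `<=` S2 -> fine (Q S1) <= fine (Q S2).
Proof.
move=> m1 m2 s12; apply: fine_le; rewrite ?inE.
- exact: fin_num_measure.
- exact: fin_num_measure.
apply: le_measure; rewrite ?inE; [exact: m1|exact: m2|exact: s12].
Qed.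

Lemma finQ (S : set T) : measurable S -> Q S = (fine (Q S))%:E.
Proof. by move=> mS; rewrite fineK// fin_num_measure. Qed.

Lemma bint2 (S : set T) (f : T -> R) (lo hi : R) : measurable S ->
  measurable_fun setT f -> (forall t, lo <= f t <= hi) ->
  Q.-integrable S (EFin \o f).
Proof.
move=> mS mf fb.
have Zb t : `|f t| <= `|lo| + `|hi|.
  have /andP[h1 h2] := fb t.
  have h3 := ler_norm hi; have h4 := ler_norm (- lo); rewrite normrN in h4.
  have h5 := normr_ge0 lo; have h6 := normr_ge0 hi.
  rewrite ler_norml; apply/andP; split; lra.
exact: bint mS mf Zb.
Qed.
End helpers.

Lemma alg (R : realFieldType) (a b Jw Jr qw qr M tau nu : R) : a < b -> 0 < qw -> 0 <= qr ->
  (a-b)*qw <= Jw <= (b-a)*qw -> (a-b)*qr <= Jr <= (b-a)*qr ->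
  M = (Jw+Jr)/(qw+qr) -> tau = Jw/qw -> nu = qw/(qw+qr) ->
  Num.max ((M - (b - a) * (1 - nu)) / nu) (a - b) <= tau /\
  tau <= Num.min ((M - (a - b) * (1 - nu)) / nu) (b - a).
Proof.
move=> ab qw0 qr0 /andP[w1 w2] /andP[r1 r2] -> -> ->.
have qn : qw + qr != 0 by rewrite gt_eqF// ltr_wpDr.
have qwn : qw != 0 by rewrite gt_eqF.
have E1 : ((Jw + Jr) / (qw + qr) - (b - a) * (1 - qw / (qw + qr))) / (qw / (qw + qr))
   = (Jw + Jr - (b - a) * qr) / qw by field; rewrite qn qwn.
have E2 : ((Jw + Jr) / (qw + qr) - (a - b) * (1 - qw / (qw + qr))) / (qw / (qw + qr))
   = (Jw + Jr - (a - b) * qr) / qw by field; rewrite qn qwn.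
rewrite E1 E2 ge_max le_min; split; apply/andP; split.
- by rewrite ler_pM2r ?invr_gt0//; lra.
- by rewrite ler_pdivlMr//; lra.
- by rewrite ler_pM2r ?invr_gt0//; lra.
- by rewrite ler_pdivrMr//; lra.
Qed.

Unset Implicit Arguments.
Set Strict Implicit.

(* P v is the conditional law of (W, E, A, Y0, Y1) given V = v. *)
Theorem theorem1 (R : realType) (d : measure_display) (T : measurableType d)
  (TV : Type) (TW : finType) (P : TV -> probability T R)
  (W : T -> TW) (E A : T -> bool) (Y0 Y1 : T -> R) (a b : R) :
  a < b ->
  (* random variables *)
  (forall w, measurable (evw W w)) ->
  (forall x, measurable (evb E x)) ->
  (forall x, measurable (evb A x)) ->
  measurable_fun setT Y0 -> measurable_fun setT Y1 ->
  (* potential outcomes in [a,b] almost surely *)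
  (forall v, {ae P v, forall t, a <= Y0 t <= b}) ->
  (forall v, {ae P v, forall t, a <= Y1 t <= b}) ->
  (* unconfoundedness in the study population: A indep. of (Y0,Y1) given V, E = 1 *)
  (forall v (S : set (R * R)%type), measurable S -> forall a' : bool,
     cprob (P v) (evb A a' `&` [set t | S (Y0 t, Y1 t)]) (evb E true)
     = cprob (P v) (evb A a') (evb E true)
       * cprob (P v) [set t | S (Y0 t, Y1 t)] (evb E true)) ->
  (* positivity *)
  (forall v w (a' : bool), 0 < fine (P v (evw W w)) ->
     0 < cprob (P v) (evb A a') (evw W w)) ->
  (* transport assumption (1) *)
  (forall v w, 0 < fine (P v (evb E true)) -> 0 < fine (P v (evb E false)) ->
     cprob (P v) (evw W w) (evb E true) = cprob (P v) (evw W w) (evb E false)) ->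
  (* transport assumption (2) *)
  (forall v w, 0 < fine (P v (evw W w `&` evb E true)) ->
     0 < fine (P v (evw W w `&` evb E false)) ->
     cexp (P v) (fun t => Y1 t - Y0 t) (evw W w `&` evb E true)
     = cexp (P v) (fun t => Y1 t - Y0 t) (evw W w `&` evb E false)) ->
  forall (v : TV) (w : TW),
    (* well-definedness of mu_1(v), mu_0(v), nu(v,w) *)
    (forall a' : bool, 0 < fine (P v (evb A a' `&` evb E true))) ->
    0 < fine (P v (evb E false)) ->
    0 < nu_ (P v) E W w ->
    let mu1 := mu_ (P v) E A Y0 Y1 true in
    let mu0 := mu_ (P v) E A Y0 Y1 false in
    let nu := nu_ (P v) E W w in
    let tau := cexp (P v) (fun t => Y1 t - Y0 t) (evw W w `&` evb E true) in
    Num.max ((mu1 - mu0 - (b - a) * (1 - nu)) / nu) (a - b) <= tau /\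
    tau <= Num.min ((mu1 - mu0 - (a - b) * (1 - nu)) / nu) (b - a).

Proof.
move=> ab mW mE mA mY0 mY1 aeY0 aeY1 hind hpos htr1 htr2 v w hAE hF0 hnu.
move=> mu1 mu0 nu tau.
pose cl (y : R) := Num.min (Num.max y a) b.
have mcl : measurable_fun setT cl.
  apply: measurable_minr; last exact: measurable_cst.
  apply: measurable_maxr; [exact: measurable_id | exact: measurable_cst].
have clab y : a <= cl y <= b.
  rewrite /cl le_min ge_min le_max lexx (ltW ab) lexx /= orbT andbT.
  by rewrite orbT.
have clid y : a <= y <= b -> cl y = y.
  by case/andP => h1 h2; rewrite /cl max_l// min_l.
set Q := P v.
pose Z0 t := cl (Y0 t); pose Z1 t := cl (Y1 t).
have mZ0 : measurable_fun setT Z0 := measurableT_comp mcl mY0.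
have mZ1 : measurable_fun setT Z1 := measurableT_comp mcl mY1.
have ae0 : {ae Q, forall t, Y0 t = Z0 t}.
  by apply: filterS (aeY0 v) => t h; rewrite /Z0 clid.
have ae1 : {ae Q, forall t, Y1 t = Z1 t}.
  by apply: filterS (aeY1 v) => t h; rewrite /Z1 clid.
pose F1 := evb E true; pose F0 := evb E false; pose Ww := evw W w.
have mF1 : measurable F1 := mE true.
have mF0 : measurable F0 := mE false.
have mWw : measurable Ww := mW w.
pose qF := fine (Q F1).
have qF0 : 0 < qF.
  have h2 : fine (Q (evb A true `&` evb E true)) <= qF.
    by apply: fQ_le => //; exact: measurableI.
  exact: (lt_le_trans (hAE true) h2).
have qFn : qF != 0 by rewrite gt_eqF.
have muE (a' : bool) : mu_ Q E A Y0 Y1 a' =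
    (\int[Q]_(x in F1) (if a' then Z1 else Z0) x) / qF.
  pose Za := if a' then Z1 else Z0.
  have mZa : measurable_fun setT Za by rewrite /Za; case: (a').
  have Zab t : a <= Za t <= b by rewrite /Za; case: (a') => /=; apply: clab.
  pose Ga := evb A a' `&` F1.
  have mGa : measurable Ga by apply: measurableI.
  have qG0 : 0 < fine (Q Ga) := hAE a'.
  pose c := fine (Q Ga) / qF.
  have hc : 0 <= c by rewrite /c divr_ge0// ltW.
  have hB (B : set R) : measurable B ->
      Q (Ga `&` Za @^-1` B) = ((NngNum hc)%:num%:E * Q (F1 `&` Za @^-1` B))%E.
    move=> mB.
    pose g := fun p : (R * R)%type => cl (if a' then p.2 else p.1).
    have mg : measurable_fun setT g.
      apply: measurableT_comp => //; case: (a').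
        exact: measurable_snd.
      exact: measurable_fst.
    pose S := g @^-1` B.
    have mS : measurable S by have := mg measurableT B mB; rewrite setTI.
    have := hind v S mS a'; rewrite /cprob.
    have -> : [set t | S (Y0 t, Y1 t)] = Za @^-1` B by rewrite /S /g /Za; case: (a').
    rewrite -/F1 -/Q -/qF => h.
    have -> : Ga `&` Za @^-1` B = (evb A a' `&` Za @^-1` B) `&` F1.
      by rewrite /Ga setIAC.
    have -> : F1 `&` Za @^-1` B = Za @^-1` B `&` F1 by rewrite setIC.
    have mZB : measurable (Za @^-1` B).
      by have := mZa measurableT B mB; rewrite setTI.
    rewrite (finQ Q (measurableI _ _ (measurableI _ _ (mA a') mZB) mF1)).
    rewrite (finQ Q (measurableI _ _ mZB mF1)) -EFinM; congr EFin.
    rewrite -[LHS](@divfK _ qF)// h /= /c /Ga; field.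
    exact: qFn.
  rewrite /mu_ /cexp -/F1 -/Ga.
  have e1 : \int[Q]_(x in Ga) Yobs A Y0 Y1 x =
            \int[Q]_(x in Ga) (if a' then Y1 else Y0) x.
    apply: eq_Rintegral => t; rewrite inE => -[At _].
    rewrite /Yobs; move: At; rewrite /evb /= => ->.
    by case: (a').
  have e2 : \int[Q]_(x in Ga) (if a' then Y1 else Y0) x =
            \int[Q]_(x in Ga) Za x.
    by rewrite /Za; case: (a'); apply: ae_Rint.
  rewrite e1 e2 (indep_int mGa mF1 mZa Zab hB) /= /c.
  field; apply/andP; split => //; by rewrite gt_eqF.
pose X t := Z1 t - Z0 t.
have mX : measurable_fun setT X by apply: measurable_funB.
have Xb t : a - b <= X t <= b - a.
  rewrite /X; have /andP[h1 h2] := clab (Y1 t); have /andP[h3 h4] := clab (Y0 t).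
  rewrite -/(Z1 t) -/(Z0 t) in h1 h2 h3 h4.
  apply/andP; split; lra.
have mWF : measurable (Ww `&` F1) by apply: measurableI.
have mNWF : measurable (~` Ww `&` F1) by apply: measurableI => //; exact: measurableC.
have eF : F1 = (Ww `&` F1) `|` (~` Ww `&` F1) by rewrite -setIUl setUCr setTI.
have dj : (Ww `&` F1) `&` (~` Ww `&` F1) = set0 by rewrite setIACA setICr set0I.
pose qw := fine (Q (Ww `&` F1)); pose qr := fine (Q (~` Ww `&` F1)).
have qFE : qF = qw + qr.
  rewrite /qF eF measureU// fineD// ?inE; exact: fin_num_measure.
have IF : \int[Q]_(x in F1) X x = \int[Q]_(x in Ww `&` F1) X x +
                        \int[Q]_(x in ~` Ww `&` F1) X x.
  rewrite {1}eF Rintegral_setU//.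
  - by rewrite -eF; exact: (bint2 Q mF1 mX Xb).
  - by apply/eqP.
have M10 : mu1 - mu0 = (\int[Q]_(x in Ww `&` F1) X x +
                        \int[Q]_(x in ~` Ww `&` F1) X x) / (qw + qr).
  rewrite /mu1 /mu0 !muE /= -mulrBl -RintegralB//; last 2 first.
  - exact: (bint2 Q mF1 mZ1 (fun t => clab (Y1 t))).
  - exact: (bint2 Q mF1 mZ0 (fun t => clab (Y0 t))).
  by rewrite -IF qFE.
have aeX : {ae Q, forall t, Y1 t - Y0 t = X t}.
  by apply: filterS2 ae0 ae1 => t h0 h1; rewrite /X h0 h1.
have tauE : tau = \int[Q]_(x in Ww `&` F1) X x / qw.
  rewrite /tau /cexp -/Q -/F1 -/Ww; congr (_ / _).
  apply: ae_Rint => //; apply: measurable_funB => //.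
have nuE : nu = qw / (qw + qr).
  rewrite /nu /nu_ -qFE -/Q.
  by rewrite -(htr1 v w qF0 hF0) /cprob.
have qw0 : 0 < qw.
  have := hnu; rewrite -/nu nuE -qFE => h.
  by have := mulr_gt0 h qF0; rewrite divfK.
apply: (alg ab qw0 _ _ _ M10 tauE nuE).
- by rewrite /qr fine_ge0// measure_ge0.
- exact: (Rint_bnd Q mWF mX Xb).
- exact: (Rint_bnd Q mNWF mX Xb).
Qed.
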